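(* Let $n\ge1$, $\bar M_0=\{u\in\mathbb{C}^{n+2}\mid u_1\cdots u_{n+2}=1,\ u_1+\cdots+u_{n+2}=0\}$, $\varpi:\bar M_0\to\mathbb{C}^\times$, $\varpi(u)=u_1$, and $p:\bar M_0\to\mathcal{P}^n$, $p(u)=[u_1:\cdots:u_{n+2}]$, where $\mathcal{P}^n=\{[z_1:\cdots:z_{n+2}]\in\mathbb{P}^{n+1}_{\mathbb{C}}\mid z_1+\cdots+z_{n+2}=0,\ z_i\ne0\}$. Let $U_1=\{[z_1:z_2:\cdots:z_{n+1}:1]\in\mathcal{P}^n\mid z_2,\ldots,z_{n+1}\in\mathbb{R}_{>0}\}$. Then $p^{-1}(U_1)$ consists of exactly $n+2$ connected components $U_\zeta$, indexed by the solutions $\zeta$ of $\zeta^{n+2}=(-1)^{n+1}(n+1)^{n+1}$, where $U_\zeta$ is characterized by the condition $\zeta\in\varpi(U_\zeta)$. *)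

(* Defs.v *)
(* C = R[i] (complex numbers over a
   realType R), with its standard norm topology; C^(n+2) is the row-vector
   type 'rV[C]_(n.+2) with the product topology. *)
From HB Require Import structures.
From mathcomp Require Import all_boot all_order all_algebra.
From mathcomp Require Import all_classical all_reals all_analysis.
From mathcomp Require Import complex.
Import Order.TTheory GRing.Theory Num.Theory.
Import numFieldNormedType.Exports.
Set Implicit Arguments. Unset Strict Implicit. Unset Printing Implicit Defensive.
Local Open Scope ring_scope.
Local Open Scope classical_set_scope.

Definition Cplx (R : realType) : numFieldType := R[i].

(* coordinates u_1, ..., u_{n+2} are u 0 i for i : 'I_(n.+2) (0-based) *)

Definition Mbar0 (R : realType) (n : nat) : set 'rV[Cplx R]_(n.+2) :=
  [set u | \prod_(i < n.+2) u 0 i = 1 /\ \sum_(i < n.+2) u 0 i = 0].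

Definition varpi (R : realType) (n : nat) (u : 'rV[Cplx R]_(n.+2)) : Cplx R :=
  u 0 ord0.

Definition Pn_rep (R : realType) (n : nat) (z : 'rV[Cplx R]_(n.+2)) : Prop :=
  \sum_(i < n.+2) z 0 i = 0 /\ forall i, z 0 i != 0.

Definition U1_rep (R : realType) (n : nat) (z : 'rV[Cplx R]_(n.+2)) : Prop :=
  Pn_rep z /\ z 0 ord_max = 1 /\
  forall i : 'I_(n.+2), (0 < i)%N -> (i < n.+1)%N ->
    exists r : R, 0 < r /\ z 0 i = (r%:C)%C.

(* p^{-1}(U_1) : points u of \bar M_0 whose class [u_1 : ... : u_{n+2}]
   lies in U_1, i.e. u = lambda * z for some lambda <> 0 and some
   representative z of a point of U_1 of the above form. *)
Definition preimU1 (R : realType) (n : nat) : set 'rV[Cplx R]_(n.+2) :=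
  [set u | Mbar0 u /\
    exists (lam : Cplx R) (z : 'rV[Cplx R]_(n.+2)),
      lam != 0 /\ u = lam *: z /\ U1_rep z].

Definition components (T : topologicalType) (A : set T) : set (set T) :=
  [set connected_component A x | x in A].

Definition zeta_roots (R : realType) (n : nat) : set (Cplx R) :=
  [set z | z ^+ n.+2 = (-1) ^+ n.+1 * (n.+1)%:R ^+ n.+1].

(* Main.v *)
Require Import Defs.
From HB Require Import structures.
From mathcomp Require Import all_boot all_order all_algebra.
From mathcomp Require Import all_classical all_reals all_analysis.
From mathcomp Require Import complex.
From mathcomp Require Import ring lra.
Import Order.TTheory GRing.Theory Num.Theory.
Import numFieldNormedType.Exports.
Set Implicit Arguments. Unset Strict Implicit. Unset Printing Implicit Defensive.
Local Open Scope ring_scope.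
Local Open Scope classical_set_scope.

Section Trig.
Variable R : realType.
Local Notation C := (Cplx R).

Definition om (th : R) : C := (cos th +i* sin th)%C.

Lemma omD a b : om (a + b) = om a * om b.
Proof.
rewrite /om cosD sinD; apply/eqP; rewrite eq_complex /=; apply/andP; split; apply/eqP; ring.
Qed.

Lemma om0 : om 0 = 1.
Proof. by rewrite /om cos0 sin0. Qed.

Lemma omX a k : om a ^+ k = om (a *+ k).
Proof.
elim: k => [|k IH]; first by rewrite expr0 mulr0n om0.
by rewrite exprS IH mulrS omD.
Qed.

Lemma norm_om a : `|om a| = 1.
Proof.
rewrite normc_def /= cos2Dsin2 sqrtr1 //.
Qed.
Lemma om_neq1 th : 0 < th < pi *+ 2 -> om th != 1.
Proof.
move=> /andP[h0 h2]; apply/negP => /eqP.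
rewrite /om => /eqP; rewrite eq_complex /= => /andP[/eqP c1 /eqP s0].
have [lt|gt|eq] := ltgtP th pi.
- have := @sin_gt0_pi R th; rewrite h0 lt s0 ltxx. by move/(_ isT).
- have := @sin_gt0_pi R (th - pi).
  have: sin (th - pi + pi) = - sin (th - pi) by rewrite sinDpi.
  rewrite subrK s0 => /eqP; rewrite eq_sym oppr_eq0 => /eqP ->.
  rewrite ltxx subr_gt0 gt /= => H.
  have : th - pi < pi by move: h2; rewrite mulr2n; lra.
  by move/H.
- by move: c1; rewrite eq cospi => /eqP; rewrite -subr_eq0; lra.
Qed.

Variable m : nat.
Hypothesis m0 : (0 < m)%N.

Definition xi : C := om (pi *+ 2 / m%:R).

Lemma m_gt0 : 0 < m%:R :> R. Proof. by rewrite ltr0n. Qed.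

Lemma xiX k : xi ^+ k = om (pi *+ 2 * (k%:R / m%:R)).
Proof. rewrite /xi omX -mulr_natr; congr om; ring. Qed.

Lemma xi_m : xi ^+ m = 1.
Proof.
rewrite xiX divff ?mulr1 ?pnatr_eq0 -?lt0n // /om.
by rewrite cos2pi sin2pi.
Qed.

Lemma xi_prim : m.-primitive_root xi.
Proof.
have [k pk km] := prim_order_exists m0 xi_m.
suff -> : m = k by [].
have k0 := prim_order_gt0 pk.
have kle : (k <= m)%N by apply: dvdn_leq.
case: (ltngtP k m) kle => // lt _.
have := prim_expr_order pk; rewrite xiX => H; exfalso; move: H => /eqP; apply/negP; apply: om_neq1.
have pi0 := pi_gt0 R.
have q0 : 0 < k%:R / m%:R :> R by rewrite divr_gt0 // ltr0n.
have q1 : k%:R / m%:R < 1 :> R by rewrite ltr_pdivrMr ?mul1r ?ltr_nat // ltr0n.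
apply/andP; split; first by rewrite mulr_gt0 // mulrn_wgt0.
by rewrite -[X in _ < X]mulr1 ltr_pM2l // mulrn_wgt0.
Qed.

Definition om1 : C := om (pi / m%:R).
Definition ome (k : nat) : C := om1 * xi ^+ k.

Lemma om1_m : om1 ^+ m = -1.
Proof.
have h : pi / m%:R * m%:R = pi :> R by rewrite divfK // pnatr_eq0 -lt0n.
rewrite mulr_natr in h; rewrite /om1 omX h.
rewrite /om cospi sinpi; apply/eqP; by rewrite eq_complex /= oppr0 !eqxx.
Qed.

Lemma norm_ome k : `|ome k| = 1.
Proof. by rewrite /ome xiX normrM !norm_om mulr1. Qed.

Lemma om1_neq0 : om1 != 0.
Proof. by rewrite -normr_eq0 norm_om oner_eq0. Qed.

Lemma ome_m k : ome k ^+ m = -1.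
Proof. by rewrite /ome exprMn om1_m -exprM mulnC exprM xi_m expr1n mulr1. Qed.

Lemma ome_surj w : w ^+ m = -1 -> exists2 k, (k < m)%N & w = ome k.
Proof.
move=> wm.
have : (w / om1) ^+ m = 1 by rewrite exprMn exprVn wm om1_m divrr // unitrN1.
move/(prim_rootP xi_prim) => [i hi]; exists i => //.
by rewrite /ome -hi mulrC divfK // om1_neq0.
Qed.

Lemma ome_inj i j : (i < m)%N -> (j < m)%N -> ome i = ome j -> i = j.
Proof.
move=> im jm /(mulfI om1_neq0) /eqP; rewrite (eq_prim_root_expr xi_prim).
by rewrite !modn_small // => /eqP.
Qed.
End Trig.

Lemma norm_eq_pos (R : realType) (s t : R) (a b : Cplx R) : 0 < s -> 0 < t ->
  `|a| = 1 -> `|b| = 1 -> (s%:C)%C * a = (t%:C)%C * b -> s = t /\ a = b.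
Proof.
move=> s0 t0 na nb e.
have st : s = t.
  have := congr1 (fun x => `|x|) e; rewrite /= !normrM na nb !mulr1.
  rewrite !ger0_norm ?ler0c ?ltW //.
  by case.
split => //; move: e; rewrite st; apply: mulfI.
by rewrite -normr_eq0 ger0_norm ?ler0c ?ltW // ?lt0r_neq0 ?ltcR.
Qed.

Section Cont.
Variable R : realType.
Local Notation C := (Cplx R).
Definition rc (x : R) : C := (x%:C)%C.

Lemma rcD x y : rc (x + y) = rc x + rc y. Proof. by rewrite /rc rmorphD. Qed.
Lemma rcM x y : rc (x * y) = rc x * rc y. Proof. by rewrite /rc rmorphM. Qed.
Lemma rc1 : rc 1 = 1. Proof. by rewrite /rc rmorph1. Qed.
Lemma rc_inj : injective rc. Proof. by move=> x y []. Qed.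
Lemma rc_eq0 x : (rc x == 0) = (x == 0).
Proof. by apply/eqP/eqP => [h|->]; [apply: rc_inj; rewrite h /rc rmorph0|rewrite /rc rmorph0]. Qed.
Lemma norm_rc x : 0 <= x -> `|rc x| = rc x.
Proof. by move=> x0; rewrite ger0_norm // /rc ler0c. Qed.


Lemma closed0C : closed [set x : C | x = 0].
Proof. exact: (accessible_closed_set1 (hausdorff_accessible (@norm_hausdorff _ _))). Qed.

Lemma rc_cont : continuous rc.
Proof.
move=> x; apply/cvgrPdist_lt => e e0.
have e0' : 0 < complex.Re e.
  by move: e0; rewrite ltcE /= => /andP[_].
near=> y.
have: `|x - y| < complex.Re e by near: y; apply: cvgr_dist_lt.
move=> h; rewrite /rc -rmorphB normc_def /= expr0n /= addr0 sqrtr_sqr.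
move: e0; rewrite !ltcE /= => /andP[-> _] /=; exact: h.
Unshelve. all: by end_near. Qed.

Lemma row_cont (T : topologicalType) m (F : T -> 'rV[C]_m) :
  (forall i, continuous (fun s => F s 0 i)) -> continuous F.
Proof.
move=> cF s A [Q Qn sQ].
have : \forall t \near s, forall i j, Q i j (F t i j).
  apply: filter_forall => i; apply: filter_forall => j.
  rewrite (ord1 i); apply: cF; rewrite -(ord1 i); exact: Qn.
by apply: filterS => t Ht; apply: sQ.
Qed.

Lemma sum_cont (T : topologicalType) (I : Type) (l : seq I) (P : pred I)
  (g : I -> T -> R) : (forall i, continuous (g i)) ->
  continuous (fun s => \sum_(i <- l | P i) g i s).
Proof.
move=> cg; elim: l => [|a l IH].
  rewrite (_ : (fun s => _) = fun=> 0); first exact: cst_continuous.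
  by apply: funext => s; rewrite big_nil.
case: (boolP (P a)) => Pa.
  rewrite (_ : (fun s => _) = (g a) + (fun s => \sum_(i <- l | P i) g i s)).
    by move=> x; apply: continuousD; [apply: cg|apply: IH].
  by apply: funext => s; rewrite big_cons Pa.
rewrite (_ : (fun s => _) = (fun s => \sum_(i <- l | P i) g i s)) //.
by apply: funext => s; rewrite big_cons (negbTE Pa).
Qed.

Lemma prod_cont (T : topologicalType) (I : Type) (l : seq I) (P : pred I)
  (g : I -> T -> R) : (forall i, continuous (g i)) ->
  continuous (fun s => \prod_(i <- l | P i) g i s).
Proof.
move=> cg; elim: l => [|a l IH].
  rewrite (_ : (fun s => _) = fun=> 1); first exact: cst_continuous.
  by apply: funext => s; rewrite big_nil.
case: (boolP (P a)) => Pa.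
  rewrite (_ : (fun s => _) = (g a) \* (fun s => \prod_(i <- l | P i) g i s)).
    by move=> x; apply: continuousM; [apply: cg|apply: IH].
  by apply: funext => s; rewrite big_cons Pa.
rewrite (_ : (fun s => _) = (fun s => \prod_(i <- l | P i) g i s)) //.
by apply: funext => s; rewrite big_cons (negbTE Pa).
Qed.

Lemma exp_cont (T : topologicalType) (f : T -> R) : continuous f -> continuous (fun s => expR (f s)).
Proof. by move=> cf x; apply: (continuous_comp (cf x)); apply: continuous_expR. Qed.

Lemma ln_cont (T : topologicalType) (f : T -> R) : continuous f -> (forall s, 0 < f s) ->
  continuous (fun s => ln (f s)).
Proof. by move=> cf fp x; apply: (continuous_comp (cf x)); apply: continuous_ln. Qed.

End Cont.

Section Alg.
Variable R : realType.
Variable n : nat.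
Local Notation C := (Cplx R).
Local Notation m := n.+2.

Definition mid (i : 'I_m) := (i != ord0) && (i != ord_max).

Lemma rc_sum (F : 'I_m -> R) : rc (\sum_(i | mid i) F i) = \sum_(i | mid i) rc (F i).
Proof. by rewrite /rc rmorph_sum. Qed.
Lemma rc_prod (F : 'I_m -> R) : rc (\prod_(i | mid i) F i) = \prod_(i | mid i) rc (F i).
Proof. by rewrite /rc rmorph_prod. Qed.
Lemma ord0_max : (ord0 : 'I_m) != ord_max.
Proof. by []. Qed.
Lemma ordmax0 : (ord_max : 'I_m) != ord0.
Proof. by []. Qed.

Lemma big_split3p (F : 'I_m -> C) :
  \prod_(i < m) F i = F ord0 * (F ord_max * \prod_(i | mid i) F i).
Proof.
rewrite (bigD1 ord0) //= (bigD1 ord_max) //=.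
Qed.

Lemma big_split3s (F : 'I_m -> C) :
  \sum_(i < m) F i = F ord0 + (F ord_max + \sum_(i | mid i) F i).
Proof.
rewrite (bigD1 ord0) //= (bigD1 ord_max) //=.
Qed.

Lemma card_mid : #|[pred i : 'I_m | mid i]| = n.
Proof.
have h1 := cardD1 ord0 (predT : pred 'I_m).
have h2 := cardD1 (ord_max : 'I_m) [predD1 (predT : pred 'I_m) & ord0].
rewrite !inE /= in h1 h2.
have e : #|(predT : pred 'I_m)| = m by exact: card_ord.
rewrite e add1n in h1; case: h1 => h1; rewrite -h1 add1n in h2; case: h2 => h2; rewrite [RHS]h2.
by apply: eq_card => i; rewrite !inE /mid andbT andbC.
Qed.

Definition mk (l : C) (r : 'I_m -> R) : 'rV[C]_m :=
  \row_i (if i == ord0 then - l * rc (1 + \sum_(j | mid j) r j)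
          else if i == ord_max then l else l * rc (r i)).

Definition P (r : 'I_m -> R) := (1 + \sum_(j | mid j) r j) * \prod_(j | mid j) r j.

Lemma mk_ord0 l r : mk l r 0 ord0 = - l * rc (1 + \sum_(j | mid j) r j).
Proof. by rewrite mxE eqxx. Qed.
Lemma mk_max l r : mk l r 0 ord_max = l.
Proof. by rewrite mxE (negbTE ordmax0) eqxx. Qed.
Lemma mk_mid l r i : mid i -> mk l r 0 i = l * rc (r i).
Proof. by case/andP => h1 h2; rewrite mxE (negbTE h1) (negbTE h2). Qed.

Lemma mk_sum l r : \sum_(i < m) mk l r 0 i = 0.
Proof.
rewrite big_split3s mk_ord0 mk_max (eq_bigr (fun i => l * rc (r i))); last first.
  by move=> i; apply: mk_mid.
by rewrite -mulr_sumr -rc_sum rcD rc1; ring.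
Qed.

Lemma mk_prod l r : \prod_(i < m) mk l r 0 i = - l ^+ m * rc (P r).
Proof.
rewrite big_split3p mk_ord0 mk_max.
rewrite (eq_bigr (fun i => l * rc (r i))); last by move=> i; apply: mk_mid.
rewrite big_split /= prodr_const card_mid -rc_prod /P rcM !exprS; ring.
Qed.

Lemma mk_scale l r : mk l r = l *: mk 1 r.
Proof.
apply/rowP => i; rewrite !mxE; case: ifP => _; first ring.
by case: ifP => _; ring.
Qed.

Definition good l r := [/\ l != 0, forall i, mid i -> 0 < r i & - l ^+ m * rc (P r) = 1].

Lemma mid_ordP (i : 'I_m) : mid i = (0 < i)%N && (i < n.+1)%N.
Proof.
rewrite /mid -!(inj_eq val_inj) /= lt0n; congr (_ && _).
by rewrite ltn_neqAle -ltnS ltn_ord andbT.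
Qed.

Lemma sum_mid_ge0 (r : 'I_m -> R) : (forall i, mid i -> 0 < r i) -> 0 < 1 + \sum_(j | mid j) r j.
Proof.
move=> h; rewrite ltr_pwDl // sumr_ge0 // => i /h; exact: ltW.
Qed.

Lemma P_gt0 r : (forall i, mid i -> 0 < r i) -> 0 < P r.
Proof.
move=> h; rewrite /P mulr_gt0 ?sum_mid_ge0 // prodr_gt0 //.
Qed.

Lemma mk_pre l r : good l r -> preimU1 (mk l r).
Proof.
case=> l0 rpos pr; split; first by split; [rewrite mk_prod|apply: mk_sum].
exists l, (mk 1 r); split => //; split; first exact: mk_scale.
split; last split.
- split; first exact: mk_sum.
  move=> i; case: (boolP (i == ord0)) => [/eqP ->|i0].
    rewrite mk_ord0 mulN1r oppr_eq0 rc_eq0 lt0r_neq0 //; exact: sum_mid_ge0.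
  case: (boolP (i == ord_max)) => [/eqP ->|im]; first by rewrite mk_max oner_eq0.
  rewrite mk_mid; last by rewrite /mid i0 im.
  rewrite (mul1r (rc (r i))) rc_eq0 lt0r_neq0 //; apply: rpos; by rewrite /mid i0 im.
- by rewrite mk_max.
- move=> i h1 h2; have hm : mid i by rewrite mid_ordP h1.
  by exists (r i); split; [exact: rpos| rewrite mk_mid // mul1r].
Qed.

Lemma pre_mk u : preimU1 u -> exists l r, u = mk l r /\ good l r.
Proof.
move=> [[pr su] [lam [z [l0 [uz [[sz nz] [zm zmid]]]]]]].
pose r i : R := @complex.Re R (z 0 i).
have zmid' : forall i, mid i -> z 0 i = rc (r i) /\ 0 < r i.
  move=> i; rewrite mid_ordP => /andP[h1 h2].
  rewrite /r; have [x [x0 ->]] := zmid i h1 h2; by split.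
have ez : z = mk 1 r.
  apply/rowP => j; rewrite [in RHS]mxE.
  case: ifP => [/eqP ->|j0].
    move: sz; rewrite big_split3s zm (eq_bigr (fun i => rc (r i))); last first.
      by move=> i /zmid' [].
    rewrite -rc_sum rcD rc1 => /eqP; rewrite addr_eq0 => /eqP ->; ring.
  case: ifP => [/eqP ->|jm] //.
  have mj : mid j by rewrite /mid j0 jm.
  by have [-> _] := zmid' j mj; rewrite (mul1r (rc (r j))).
exists lam, r; split; first by rewrite uz ez -mk_scale.
split => //; first by move=> i /zmid' [].
by rewrite -mk_prod mk_scale -ez -uz.
Qed.

Lemma preimU1E u : preimU1 u <-> exists l r, u = mk l r /\ good l r.
Proof. by split; [apply: pre_mk|move=> [l [r [-> g]]]; apply: mk_pre]. Qed.

End Alg.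
Section Main.
Variable R : realType.
Variable n : nat.
Local Notation C := (Cplx R).
Local Notation m := n.+2.
Local Notation w := (@ome R m).

Lemma m0 : (0 < m)%N. Proof. by []. Qed.

Definition lam (u : 'rV[C]_m) := u 0 ord_max.

Definition S k := [set u : 'rV[C]_m | preimU1 u /\ exists2 t : R, 0 < t & lam u = rc t * w k].

Lemma rc_gt0 (x : R) : (0 < rc x) = (0 < x).
Proof. by rewrite /rc ltcE /= eqxx. Qed.

Lemma rcX (x : R) k : rc (x ^+ k) = rc x ^+ k. Proof. by rewrite /rc rmorphXn. Qed.
Lemma rcV (x : R) : rc (x^-1) = (rc x)^-1. Proof. by rewrite /rc fmorphV. Qed.

Lemma norm_real (l : C) : exists2 t, 0 <= t & `|l| = rc t.
Proof.
have [t ht] := complex_realP _ (normr_real l).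
exists t => //; rewrite -ler0c; by move: (normr_ge0 l); rewrite ht.
Qed.

Lemma good_powm t k (r : 'I_m -> R) : good (rc t * w k) r -> t ^+ m * P r = 1.
Proof.
case=> _ _; rewrite exprMn ome_m // mulrN1 opprK -rcX -rcM.
by rewrite -rc1 => /rc_inj.
Qed.

Lemma good_of t k (r : 'I_m -> R) : 0 < t -> (forall i, mid i -> 0 < r i) -> t ^+ m * P r = 1 ->
  good (rc t * w k) r.
Proof.
move=> t0 rp e; split => //.
  apply: mulf_neq0; first by rewrite rc_eq0 lt0r_neq0.
  by rewrite -normr_eq0 norm_ome oner_neq0.
by rewrite exprMn ome_m // mulrN1 opprK -rcX -rcM e rc1.
Qed.

Lemma S_cover u : preimU1 u -> exists2 k, (k < m)%N & S k u.
Proof.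
move=> pu; have [l [r [ue g]]] := pre_mk pu.
have [l0 rp pr] := g.
have Pp := P_gt0 rp.
have [t t0 ht] := norm_real l.
have tp : 0 < t by rewrite -rc_gt0 -ht normr_gt0.
have lm : l ^+ m = - (rc (P r))^-1.
  apply: (mulIf (x := rc (P r))); first by rewrite rc_eq0 lt0r_neq0.
  rewrite mulNr mulVf ?rc_eq0 ?lt0r_neq0 //; by rewrite -pr mulNr opprK.
have tm : rc t ^+ m = (rc (P r))^-1.
  rewrite -ht -normrX lm normrN normfV norm_rc //; exact: ltW.
have : (l / rc t) ^+ m = -1.
  by rewrite exprMn exprVn tm lm invrK mulNr mulVf // rc_eq0 lt0r_neq0.
move/ome_surj => [] // k km hk; exists k => //; split => //.
exists t => //; rewrite /lam ue mk_max -hk mulrC divfK // rc_eq0 lt0r_neq0 //.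
Qed.

Lemma S_uniq u k j : (k < m)%N -> (j < m)%N -> S k u -> S j u -> k = j.
Proof.
move=> km jm [_ [t t0 ht]] [_ [s s0 hs]].
have [_ e] := norm_eq_pos t0 s0 (norm_ome R m k) (norm_ome R m j) (etrans (esym ht) hs).
exact: ome_inj e.
Qed.

Lemma S_sub k : S k `<=` @preimU1 R n. Proof. by move=> u []. Qed.


Definition Kset k := [set u : 'rV[C]_m | lam u - `|lam u| * w k = 0].

Lemma lam_cont : continuous lam.
Proof. exact: coord_continuous. Qed.

Lemma Kf_cont k : continuous (fun u : 'rV[C]_m => lam u - `|lam u| * w k).
Proof.
move=> u; apply: (cvgB (F := nbhs u)); first exact: lam_cont.
apply: cvgM; last exact: cvg_cst.
apply: cvg_norm; exact: lam_cont.
Qed.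

Lemma Kset_closed k : closed (Kset k).
Proof.
have -> : Kset k = (fun u : 'rV[C]_m => lam u - `|lam u| * w k) @^-1` [set 0] by [].
apply: preimage_closed; last exact: closed0C.
move=> u _; exact: Kf_cont.
Qed.

Lemma S_in_K k : S k `<=` Kset k.
Proof.
move=> u [_ [t t0 ht]]; rewrite /Kset /= ht normrM norm_ome mulr1 norm_rc ?subrr //.
exact: ltW.
Qed.

Lemma S_K_disj u k j : (k < m)%N -> (j < m)%N -> j != k -> S k u -> ~ Kset j u.
Proof.
move=> km jm jk Su; have [_ [t t0 ht]] := Su; rewrite /Kset /= => /eqP.
rewrite subr_eq0 ht normrM norm_ome mulr1 norm_rc ?ltW // => /eqP e.
have [_ e'] := norm_eq_pos t0 t0 (norm_ome R m k) (norm_ome R m j) e.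
by move: jk; rewrite (ome_inj m0 km jm e') eqxx.
Qed.

Lemma conn_in_S k Cc u : (k < m)%N -> connected Cc -> Cc `<=` @preimU1 R n ->
  Cc u -> S k u -> Cc `<=` S k.
Proof.
move=> km cC sC Cu Su.
pose B := @preimU1 R n `\` S k.
pose L := \bigcup_(j in [set j | (j < m)%N /\ j != k]) Kset j.
have Lc : closed L.
  apply: closed_bigcup; last by move=> j _; exact: Kset_closed.
  by apply: (sub_finite_set _ (finite_II m)) => j [].
have BL : B `<=` L.
  move=> v [pv nS]; have [j jm Sj] := S_cover pv.
  exists j; last exact: S_in_K.
  by split => //; apply/negP => /eqP ejk; apply: nS; rewrite -ejk.
have sep : separated (S k) B.
  split.
  - apply/seteqP; split => // v [cv [pv nS]].
    have hK : closure (S k) `<=` Kset k.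
      rewrite [X in _ `<=` X](closure_id _).1; [exact: closureS (@S_in_K k) | exact: Kset_closed].
    have := hK v cv.
    have [j jm Sj] := S_cover pv.
    have jk : k != j by apply/negP => /eqP ejk; apply: nS; rewrite ejk.
    by move=> /(S_K_disj jm km jk Sj).
  - apply/seteqP; split => // v [Sv cv].
    have hL : closure B `<=` L.
      rewrite [X in _ `<=` X](closure_id _).1; [exact: closureS BL | exact: Lc].
    have := hL v cv.
    by move=> [j [jm jk] Kj]; apply: (S_K_disj km jm jk Sv).
have CU : Cc `<=` S k `|` B.
  move=> v Cv; have [Sv|nSv] := pselect (S k v); [by left|right; split => //; exact: sC].
case: (connected_subset sep CU cC) => // CB.
by have [_ ] := CB u Cu.
Qed.

Definition Tinv (p : R) : R := expR (- ln p / m%:R).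

Lemma Tinv_gt0 p : 0 < Tinv p. Proof. exact: expR_gt0. Qed.

Lemma Tinv_pow p : 0 < p -> Tinv p ^+ m * p = 1.
Proof.
move=> p0; rewrite /Tinv -expRM_natr divfK; last by rewrite pnatr_eq0.
by rewrite expRN lnK ?posrE // mulVf // lt0r_neq0.
Qed.

Definition one : 'I_m -> R := fun _ => 1.

Definition b k := mk (rc (Tinv (P one)) * w k) one.

Definition rs (r : 'I_m -> R) (s : R) : 'I_m -> R := fun i => expR (s * ln (r i)).

Definition gam k r s := mk (rc (Tinv (P (rs r s))) * w k) (rs r s).

Lemma rs_pos r s i : 0 < rs r s i. Proof. exact: expR_gt0. Qed.

Lemma gam_S k r s : S k (gam k r s).
Proof.
split; last by exists (Tinv (P (rs r s))); [exact: Tinv_gt0 | rewrite /lam mk_max].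
apply: mk_pre; apply: good_of; first exact: Tinv_gt0.
  by move=> i _; exact: rs_pos.
by apply: Tinv_pow; apply: P_gt0 => i _; exact: rs_pos.
Qed.

Lemma rs0 r : rs r 0 = one.
Proof. by apply: funext => i; rewrite /rs mul0r expR0. Qed.

Lemma gam0 k r : gam k r 0 = b k.
Proof. by rewrite /gam rs0. Qed.

Lemma mk_ext l (r r' : 'I_m -> R) : (forall i, mid i -> r i = r' i) -> mk l r = mk l r'.
Proof.
move=> e; apply/rowP => i; rewrite !mxE.
rewrite (eq_bigr _ e); case: ifP => [//|i0]; case: ifP => [//|im].
by rewrite e // /mid i0 im.
Qed.

Lemma P_ext (r r' : 'I_m -> R) : (forall i, mid i -> r i = r' i) -> P r = P r'.
Proof. by move=> e; rewrite /P (eq_bigr _ e) [X in _ * X](eq_bigr _ e). Qed.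

Lemma gam1 k r t : 0 < t -> good (rc t * w k) r -> gam k r 1 = mk (rc t * w k) r.
Proof.
move=> t0 g; have [_ rp _] := g.
have e : forall i, mid i -> rs r 1 i = r i.
  by move=> i /rp ri; rewrite /rs mul1r lnK // posrE.
rewrite /gam (mk_ext _ e) (P_ext e); congr mk; congr (rc _ * _).
have Pp := P_gt0 rp.
have := good_powm g; rewrite -(Tinv_pow Pp) => /(mulIf (lt0r_neq0 Pp)) /eqP.
rewrite eqrXn2 // ?ltW ?Tinv_gt0 // => /eqP ->. done.
Qed.

Lemma contR_M (f g : R -> R) : continuous f -> continuous g -> continuous (fun s => f s * g s).
Proof. by move=> cf cg x; apply: (cvgM (F := nbhs x)); [exact: cf|exact: cg]. Qed.

Lemma contR_cst (c : R) : continuous (fun _ : R => c).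
Proof. exact: cst_continuous. Qed.

Lemma contR_id : continuous (fun s : R => s).
Proof. by move=> x. Qed.

Lemma cont_rcM (f : R -> R) (c : C) : continuous f -> continuous (fun s => rc (f s) * c).
Proof.
move=> cf x; apply: (cvgM (F := nbhs x)); last exact: cvg_cst.
exact: (continuous_comp (cf x) (@rc_cont R (f x))).
Qed.

Lemma rs_cont r i : continuous (fun s => rs r s i).
Proof. by apply: exp_cont; apply: contR_M; [exact: contR_id|exact: contR_cst]. Qed.

Lemma Prs_cont r : continuous (fun s => P (rs r s)).
Proof.
rewrite /P; apply: contR_M.
  move=> x; apply: (cvgD (F := nbhs x)); first exact: cvg_cst.
  by apply: sum_cont => i; exact: rs_cont.
by apply: prod_cont => i; exact: rs_cont.
Qed.

Lemma T_cont r : continuous (fun s => Tinv (P (rs r s))).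
Proof.
apply: exp_cont; apply: contR_M; last exact: contR_cst.
have cl : continuous (fun s => ln (P (rs r s))).
  apply: ln_cont; first exact: Prs_cont.
  by move=> s; apply: P_gt0 => i _; exact: rs_pos.
move=> x; apply: (cvgN (F := nbhs x)); exact: cl.
Qed.

Lemma gam_cont k r : continuous (gam k r).
Proof.
apply: row_cont => i; rewrite /gam.
case: (boolP (i == ord0)) => [/eqP ->|i0].
  rewrite (_ : (fun s => _) = fun s => rc (Tinv (P (rs r s)) *
      (1 + \sum_(j | mid j) rs r s j)) * (- w k)).
    apply: cont_rcM; apply: contR_M; first exact: T_cont.
    move=> x; apply: (cvgD (F := nbhs x)); first exact: cvg_cst.
    by apply: sum_cont => j; exact: rs_cont.
  by apply: funext => s; rewrite mk_ord0 rcM; ring.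
case: (boolP (i == ord_max)) => [/eqP ->|im].
  rewrite (_ : (fun s => _) = fun s => rc (Tinv (P (rs r s))) * w k).
    by apply: cont_rcM; exact: T_cont.
  by apply: funext => s; rewrite mk_max.
have mi : mid i by rewrite /mid i0 im.
rewrite (_ : (fun s => _) = fun s => rc (Tinv (P (rs r s)) * rs r s i) * w k).
  by apply: cont_rcM; apply: contR_M; [exact: T_cont|exact: rs_cont].
by apply: funext => s; rewrite mk_mid // rcM; ring.
Qed.

Lemma connectedTR : connected (setT : set R).
Proof. by apply/connected_intervalP => x y _ _ z _. Qed.

Lemma S_conn k : connected (S k).
Proof.
pose G := [set r : 'I_m -> R | forall i, mid i -> 0 < r i].
have -> : S k = \bigcup_(r in G) (gam k r @` setT).
  apply/seteqP; split => [u Su|u [r _ [s _ <-]]]; last exact: gam_S.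
  have [[l [r [ue g]]] [t t0 ht]] := (pre_mk Su.1, Su.2).
  have [_ rp _] := g.
  exists r => //; exists 1 => //.
  move: ht g; rewrite ue /lam mk_max => -> g.
  exact: gam1.
apply: bigcup_connected.
  by exists (b k) => r _; exists 0 => //; exact: gam0.
move=> r _; apply: connected_continuous_connected; first exact: connectedTR.
by apply: continuous_subspaceT; exact: gam_cont.
Qed.


Lemma sum_one : \sum_(j | mid j) one j = n%:R.
Proof.
rewrite /one (eq_bigl (fun j => j \in [pred i : 'I_m | mid i])) //.
by rewrite sumr_const card_mid.
Qed.

Lemma P_one : P one = n.+1%:R.
Proof. by rewrite /P sum_one big1 // mulr1 mulrS. Qed.

Definition c0 := Tinv (P one) * n.+1%:R.

Lemma c0_gt0 : 0 < c0.
Proof. by rewrite /c0 mulr_gt0 ?Tinv_gt0 // ltr0n. Qed.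

Lemma c0_pow : c0 ^+ m = n.+1%:R ^+ n.+1.
Proof.
have := Tinv_pow (P_gt0 (r := one) (fun _ _ => ltr01)); rewrite P_one => e.
by rewrite /c0 exprMn [X in _ * X]exprS P_one mulrA e mul1r.
Qed.

Lemma varpi_mk (l : C) (r : 'I_m -> R) : varpi (mk l r) = - l * rc (1 + \sum_(j | mid j) r j).
Proof. exact: mk_ord0. Qed.

Lemma varpi_b k : varpi (b k) = - (rc c0 * w k).
Proof. by rewrite varpi_mk sum_one -mulrS /c0 rcM; ring. Qed.

Lemma b_S k : S k (b k).
Proof. by rewrite -(gam0 k one); exact: gam_S. Qed.

Lemma varpi_S u k : S k u -> exists2 s, 0 < s & varpi u = - (rc s * w k).
Proof.
move=> [pu [t t0 ht]]; have [l [r [ue [_ rp _]]]] := pre_mk pu.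
move: ht; rewrite ue /lam mk_max => ->.
exists (t * (1 + \sum_(j | mid j) r j)).
  by rewrite mulr_gt0 // sum_mid_ge0.
by rewrite varpi_mk rcM; ring.
Qed.

Lemma rc_nat k : rc (k%:R : R) = k%:R. Proof. by rewrite /rc rmorph_nat. Qed.

Lemma sign_sq : (-1) ^+ n.+1 * (-1) ^+ n.+1 = 1 :> C.
Proof. by rewrite -exprMn mulrNN mulr1 expr1n. Qed.

Lemma zeta_char z : @zeta_roots R n z <-> exists2 k, (k < m)%N & z = - (rc c0 * w k).
Proof.
split.
  rewrite /zeta_roots /= => hz.
  have X0 : (n.+1%:R ^+ n.+1 : C) != 0 by rewrite expf_neq0 // pnatr_eq0.
  have cm : rc c0 ^+ m = n.+1%:R ^+ n.+1 by rewrite -rcX c0_pow rcX rc_nat.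
  have c00 : rc c0 != 0 by rewrite rc_eq0 lt0r_neq0 // c0_gt0.
  have : (- (z / rc c0)) ^+ m = -1.
    rewrite exprNn exprMn exprVn cm hz [(-1) ^+ m]exprS.
    rewrite mulrA mulrA -[(-1) * _ * _]mulrA sign_sq mulr1 -mulrA mulfV // mulr1.
    done.
  move/(ome_surj m0) => [k km hk]; exists k => //.
  by rewrite -hk mulrN opprK mulrC divfK.
move=> [k km ->]; rewrite /zeta_roots /=.
rewrite [LHS]exprNn exprMn ome_m // -rcX c0_pow rcX rc_nat [(-1) ^+ m]exprS.
ring.
Qed.

Lemma CC k u : (k < m)%N -> S k u -> connected_component (@preimU1 R n) u = S k.
Proof.
move=> km Su; apply/seteqP; split.
  have := conn_in_S km (@component_connected _ (@preimU1 R n) u)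
    (@connected_component_sub _ (@preimU1 R n) u) _ Su.
  apply; exact: connected_component_refl (S_sub Su).
by apply: connected_component_max; [exact: Su | exact: S_sub | exact: S_conn].
Qed.

Lemma comp_eq : components (@preimU1 R n) = [set S k | k in `I_m].
Proof.
apply/seteqP; split.
  move=> U [x px <-]; have [k km Sx] := S_cover px.
  by exists k => //; rewrite (CC km Sx).
move=> U [k km <-]; exists (b k); first exact: S_sub (b_S k).
exact: CC km (b_S k).
Qed.

Lemma S_inj k j : (k < m)%N -> (j < m)%N -> S k = S j -> k = j.
Proof.
move=> km jm e; apply: (S_uniq km jm (b_S k)); rewrite -e; exact: b_S.
Qed.

End Main.

Unset Implicit Arguments.
Local Open Scope card_scope.

Theorem mainTheorem12 (R : realType) (n : nat) (hn : (1 <= n)%N) :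
  (components (@preimU1 R n) #= `I_(n.+2)) /\
  (forall zeta, @zeta_roots R n zeta ->
     exists! U, components (@preimU1 R n) U /\ (varpi (n:=n) @` U) zeta) /\
  (forall U, components (@preimU1 R n) U ->
     exists! zeta, @zeta_roots R n zeta /\ (varpi (n:=n) @` U) zeta).
Proof.
split; last split.
- rewrite comp_eq; apply: inj_card_eq => k j; rewrite !in_setE /= => km jm.
  exact: S_inj.
- move=> z /zeta_char [k km hz]; exists (S k); split.
    split; first by rewrite comp_eq; exists k.
    by exists (b R n k); [exact: b_S | rewrite varpi_b hz].
  move=> U [cU [u Uu vu]]; move: cU; rewrite comp_eq => -[j jm ej].
  rewrite -ej in Uu *; have [s s0 hs] := varpi_S Uu.
  move: hs; rewrite vu hz => /eqP; rewrite eqr_opp => /eqP e.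
  have [_ e'] := norm_eq_pos (c0_gt0 R n) s0 (norm_ome R _ k) (norm_ome R _ j) e.
  by rewrite (ome_inj (m0 n) km jm e').
- move=> U; rewrite comp_eq => -[k km <-].
  exists (- (rc (c0 R n) * ome R n.+2 k)); split.
    split; first by apply/zeta_char; exists k.
    by exists (b R n k); [exact: b_S | rewrite varpi_b].
  move=> z [/zeta_char [j jm hz] [u Su vu]].
  have [s s0 hs] := varpi_S Su.
  move: hs; rewrite vu hz => /eqP; rewrite eqr_opp => /eqP e.
  have [_ e'] := norm_eq_pos (c0_gt0 R n) s0 (norm_ome R _ j) (norm_ome R _ k) e.
  by rewrite (ome_inj (m0 n) jm km e').
Qed.
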